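(* Let $p>3$ be a prime, $n$ a positive integer, $d=\frac{p^n+3}{2}$ and $F(x)=x^d$ on $\mathrm{GF}(p^n)$, and let $c=-1$. If $p^n\equiv1\pmod4$ then ${}_c\Delta_F\le4$, and if $p^n\equiv3\pmod4$ then ${}_c\Delta_F\le3$.
   Context: For a function $F:\mathrm{GF}(p^n)\to\mathrm{GF}(p^n)$ and $a,b,c\in\mathrm{GF}(p^n)$, let ${}_c\Delta_F(a,b)=\#\{x\in\mathrm{GF}(p^n): F(x+a)-cF(x)=b\}$. The $c$-differential uniformity of $F$ is ${}_c\Delta_F=\max\{{}_c\Delta_F(a,b): a,b\in\mathrm{GF}(p^n),\ \text{and } a\neq 0 \text{ if } c=1\}$. *)

(* Defs.v *)
From HB Require Import structures.
From mathcomp Require Import all_boot all_order all_algebra all_field.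
Set Implicit Arguments. Unset Strict Implicit. Unset Printing Implicit Defensive.
Import GRing.Theory.
Local Open Scope ring_scope.

Definition cDelta (K : finFieldType) (F : K -> K) (c a b : K) : nat :=
  #|[set x : K | F (x + a) - c * F x == b]|.

Definition cDU (K : finFieldType) (F : K -> K) (c : K) : nat :=
  \max_(ab : K * K | (c != 1) || (ab.1 != 0)) cDelta F c ab.1 ab.2.

(* Main.v *)
Require Import Defs.
From HB Require Import structures.
From mathcomp Require Import all_boot all_order all_algebra all_field.
From mathcomp Require Import ring zify.
Import GRing.Theory.
Local Open Scope ring_scope.

Set Implicit Arguments.
Section Main.
Variable K : finFieldType.
Variable m : nat.
Hypothesis two_ne0 : (2:K) != 0.
Hypothesis m_gt0 : (0 < m)%N.
Hypothesis e_sq : forall x : K, x != 0 -> (x ^+ m) ^+ 2 = 1.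
Variable eps : K.
Hypothesis eps_def : (-1) ^+ m = eps.

Local Notation e x := (x ^+ m).

Lemma one_ne_m1 : (1:K) != -1.
Proof.
apply/eqP => h; move: two_ne0.
have -> : (2:K) = 1 - (-1) by ring.
by rewrite -h subrr eqxx.
Qed.

Lemma e0 : e (0:K) = 0.
Proof. by rewrite expr0n eqn0Ngt m_gt0. Qed.

Lemma e0P {x : K} : e x = 0 -> x = 0.
Proof. by move/eqP; rewrite expf_eq0 m_gt0 /= => /eqP. Qed.

Lemma e_cases (x : K) : e x = 0 \/ e x = 1 \/ e x = -1.
Proof.
have [->|nz] := eqVneq x 0; first by left; exact: e0.
right; have /eqP := e_sq x nz; rewrite sqrf_eq1 => /orP[/eqP->|/eqP->]; by [left|right].
Qed.

Lemma eN (x : K) : e (- x) = eps * e x.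
Proof. by rewrite exprNn eps_def. Qed.

Definition sg (x : K) : K := if e x == -1 then -1 else 1.

Lemma sgE (x : K) : e x * x ^+ 2 = sg x * x ^+ 2.
Proof.
rewrite /sg; case: (e_cases x) => [h|[h|h]]; rewrite h.
- by rewrite (e0P h) expr0n /= !mulr0.
- by rewrite (negbTE one_ne_m1).
- by rewrite eqxx.
Qed.

Lemma sg_cases x : sg x = 1 \/ sg x = -1.
Proof. rewrite /sg; case: ifP; by [right|left]. Qed.

Lemma sg1P {x} : sg x = 1 -> e x = 0 \/ e x = 1.
Proof.
rewrite /sg; case: ifP => [_ /eqP|h _]; first by rewrite eq_sym (negbTE one_ne_m1).
case: (e_cases x) => [|[]]; [by left|by right|by move=> h'; rewrite h' eqxx in h].
Qed.

Lemma sgm1P {x} : sg x = -1 -> e x = -1.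
Proof.
rewrite /sg; case: ifP => [/eqP //|_ /eqP]; by rewrite (negbTE one_ne_m1).
Qed.

Lemma prod01 {u v : K} : (u = 0 \/ u = 1) -> (v = 0 \/ v = 1) -> u * v != -1.
Proof.
move=> [->|->] [->|->]; rewrite ?mul0r ?mulr0 ?mulr1 ?one_ne_m1 //;
 by rewrite eq_sym oppr_eq0 oner_eq0.
Qed.

Definition G (y : K) := e (y + 1) * (y + 1) ^+ 2 + e y * y ^+ 2.

Definition T (s t b : K) : {set K} :=
  [set y | (s * (y + 1) ^+ 2 + t * y ^+ 2 == b) && (sg (y + 1) == s) && (sg y == t)].

Lemma S_sub b : [set y | G y == b] \subset
  T 1 1 b :|: T 1 (-1) b :|: T (-1) 1 b :|: T (-1) (-1) b.
Proof.
apply/subsetP => y; rewrite !inE /G sgE (sgE y) => /eqP Gy.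
case: (sg_cases (y+1)) => h1; case: (sg_cases y) => h2;
  rewrite -Gy h1 h2 !eqxx /= ?orbT //.
Qed.

Lemma card_le1_of (A : {set K}) :
  (forall y z, y \in A -> z \in A -> z = y) -> (#|A| <= 1)%N.
Proof.
move=> H; case: (set_0Vmem A) => [->|[y0 Hy0]]; first by rewrite cards0.
rewrite -(cards1 y0); apply: subset_leq_card; apply/subsetP => z Hz.
by rewrite inE (H _ _ Hy0 Hz).
Qed.

Lemma card_le2_of (A : {set K}) (f : K -> K) :
  (forall y z, y \in A -> z \in A -> z = y \/ z = f y) -> (#|A| <= 2)%N.
Proof.
move=> H; case: (set_0Vmem A) => [->|[y0 Hy0]]; first by rewrite cards0.
apply: (@leq_trans #|[set y0; f y0]|); last by rewrite cards2; case: (_ != _).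
apply: subset_leq_card; apply/subsetP => z Hz.
by rewrite !inE; case: (H _ _ Hy0 Hz) => ->; rewrite eqxx ?orbT.
Qed.

Lemma card_U4 (A B C D : {set K}) :
  (#|A :|: B :|: C :|: D| <= #|A| + #|B| + #|C| + #|D|)%N.
Proof.
apply: (leq_trans (leq_card_setU _ _).1); rewrite leq_add2r.
apply: (leq_trans (leq_card_setU _ _).1); rewrite leq_add2r.
exact: (leq_card_setU _ _).1.
Qed.

Lemma T_pair {s b y z} : s != 0 -> y \in T s s b -> z \in T s s b ->
  z = y \/ z = - 1 - y.
Proof.
move=> s0; rewrite !inE => /andP[/andP[/eqP Ey _] _] /andP[/andP[/eqP Ez _] _].
have : (z - y) * (z + y + 1) * (2 * s) = 0.
  have -> : (z - y) * (z + y + 1) * (2 * s) =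
    (s * (z + 1) ^+ 2 + s * z ^+ 2) - (s * (y + 1) ^+ 2 + s * y ^+ 2) by ring.
  by rewrite Ey Ez subrr.
move/eqP; rewrite !mulf_eq0 (negbTE two_ne0) (negbTE s0) !orbF.
case/orP => /eqP h; [left|right].
  by apply/eqP; rewrite -subr_eq0 h.
have -> : z = - 1 - y + (z + y + 1) by ring.
by rewrite h addr0.
Qed.

Lemma T_mixed {s t b y z} : s != 0 -> t = - s -> y \in T s t b -> z \in T s t b -> z = y.
Proof.
move=> s0 ht; subst t; rewrite !inE => /andP[/andP[/eqP Ey _] _] /andP[/andP[/eqP Ez _] _].
have : (z - y) * (2 * s) = 0.
  have -> : (z - y) * (2 * s) =
    (s * (z + 1) ^+ 2 + - s * z ^+ 2) - (s * (y + 1) ^+ 2 + - s * y ^+ 2) by ring.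
  by rewrite Ey Ez subrr.
move/eqP; rewrite !mulf_eq0 (negbTE two_ne0) (negbTE s0) !orbF subr_eq0.
by move/eqP.
Qed.

Lemma m1_ne0 : (-1 : K) != 0.
Proof. by rewrite oppr_eq0 oner_eq0. Qed.

Lemma excl_11_1m {b y z} : y \in T 1 1 b -> z \in T 1 (-1) b -> False.
Proof.
rewrite !inE => /andP[/andP[/eqP Ey /eqP s1] /eqP s2]
  /andP[/andP[/eqP Ez _] /eqP s3].
have hz : z = y * (y + 1).
  apply: (mulfI two_ne0).
  have -> : 2 * z = (1 * (z + 1) ^+ 2 + -1 * z ^+ 2) - 1 by ring.
  rewrite Ez -Ey; ring.
have := sgm1P s3; rewrite hz exprMn => /eqP.
by rewrite (negbTE (prod01 (sg1P s2) (sg1P s1))).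
Qed.

Lemma excl_11_m1 {b y z} : eps = 1 -> y \in T 1 1 b -> z \in T (-1) 1 b -> False.
Proof.
move=> he; rewrite !inE => /andP[/andP[/eqP Ey /eqP s1] /eqP s2]
  /andP[/andP[/eqP Ez /eqP s3] _].
have hz : z + 1 = - (y * (y + 1)).
  apply: (mulfI two_ne0).
  have -> : 2 * (z + 1) = 1 - (-1 * (z + 1) ^+ 2 + 1 * z ^+ 2) by ring.
  rewrite Ez -Ey; ring.
have := sgm1P s3; rewrite hz eN he mul1r exprMn => /eqP.
by rewrite (negbTE (prod01 (sg1P s2) (sg1P s1))).
Qed.

Lemma excl_mm_1m {b y z} : eps = -1 -> y \in T (-1) (-1) b -> z \in T 1 (-1) b -> False.
Proof.
move=> he; rewrite !inE => /andP[/andP[/eqP Ey /eqP s1] /eqP s2]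
  /andP[/andP[/eqP Ez /eqP s3] _].
have hz : z + 1 = - (y * (y + 1)).
  apply: (mulfI two_ne0).
  have -> : 2 * (z + 1) = (1 * (z + 1) ^+ 2 + -1 * z ^+ 2) + 1 by ring.
  rewrite Ez -Ey; ring.
have := sg1P s3; rewrite hz eN he exprMn (sgm1P s1) (sgm1P s2).
rewrite (_ : -1 * (-1 * -1) = -1 :> K); last by ring.
by case=> /eqP; [rewrite (negbTE m1_ne0) | rewrite eq_sym (negbTE one_ne_m1)].
Qed.

Lemma T_same_le1 {s} b : eps = -1 -> (s = 1 \/ s = -1) -> leq #|T s s b| 1.
Proof.
move=> he hs; have s0 : s != 0 by case: hs => ->; rewrite ?oner_eq0 ?m1_ne0.
apply: card_le1_of => y z Hy Hz.
case: (T_pair s0 Hy Hz) => // hz; exfalso.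
move: Hy Hz; rewrite !inE hz => /andP[/andP[_ /eqP s1] /eqP s2]
  /andP[/andP[_ /eqP s3] /eqP s4].
have ez : e (- 1 - y) = - e (y + 1).
  by rewrite (_ : - 1 - y = - (y + 1)); [rewrite eN he mulN1r | ring].
case: hs => hs; rewrite hs in s1 s2 s3 s4.
- have := sg1P s4; rewrite ez; case: (sg1P s1) => h1; rewrite h1.
  + have hy : y = -1 by apply/eqP; rewrite -subr_eq0 opprK; apply/eqP; exact: e0P h1.
    move: s2; rewrite hy => /sg1P; rewrite eN he expr1n mulr1.
    by case=> /eqP; [rewrite (negbTE m1_ne0) | rewrite eq_sym (negbTE one_ne_m1)].
  + by case=> /eqP; [rewrite (negbTE m1_ne0) | rewrite eq_sym (negbTE one_ne_m1)].
- have := sgm1P s4; rewrite ez (sgm1P s1) opprK => /eqP.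
  by rewrite (negbTE one_ne_m1).
Qed.

Lemma bound_G_1 b : eps = 1 -> (#|[set y | G y == b]| <= 4)%N.
Proof.
move=> he; apply: (leq_trans (subset_leq_card (S_sub b))).
apply: (leq_trans (card_U4 _ _ _ _)).
have h11 : leq #|T 1 1 b| 2 by apply: card_le2_of => y z; apply: T_pair; rewrite oner_eq0.
have hmm : leq #|T (-1) (-1) b| 2 by apply: card_le2_of => y z; apply: T_pair; rewrite m1_ne0.
have h1m : leq #|T 1 (-1) b| 1 by apply: card_le1_of => y z; apply: T_mixed; rewrite ?oner_eq0.
have hm1 : leq #|T (-1) 1 b| 1.
  by apply: card_le1_of => y z; apply: T_mixed; rewrite ?m1_ne0 ?opprK.
case: (set_0Vmem (T 1 1 b)) => [->|[y Hy]].
  rewrite cards0; lia.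
have e1 : #|T 1 (-1) b| = 0%N.
  apply/eqP; rewrite cards_eq0; apply/eqP/setP => z; rewrite in_set0.
  by apply/negP => Hz; exact: excl_11_1m Hy Hz.
have e2 : #|T (-1) 1 b| = 0%N.
  apply/eqP; rewrite cards_eq0; apply/eqP/setP => z; rewrite in_set0.
  by apply/negP => Hz; exact: excl_11_m1 he Hy Hz.
lia.
Qed.

Lemma bound_G_m1 b : eps = -1 -> (#|[set y | G y == b]| <= 3)%N.
Proof.
move=> he; apply: (leq_trans (subset_leq_card (S_sub b))).
apply: (leq_trans (card_U4 _ _ _ _)).
have h11 : leq #|T 1 1 b| 1 := T_same_le1 b he (or_introl erefl).
have hmm : leq #|T (-1) (-1) b| 1 := T_same_le1 b he (or_intror erefl).
have h1m : leq #|T 1 (-1) b| 1 by apply: card_le1_of => y z; apply: T_mixed; rewrite ?oner_eq0.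
have hm1 : leq #|T (-1) 1 b| 1.
  by apply: card_le1_of => y z; apply: T_mixed; rewrite ?m1_ne0 ?opprK.
case: (set_0Vmem (T 1 (-1) b)) => [->|[y Hy]].
  rewrite cards0; lia.
have e1 : #|T 1 1 b| = 0%N.
  apply/eqP; rewrite cards_eq0; apply/eqP/setP => z; rewrite in_set0.
  by apply/negP => Hz; exact: excl_11_1m Hz Hy.
have e2 : #|T (-1) (-1) b| = 0%N.
  apply/eqP; rewrite cards_eq0; apply/eqP/setP => z; rewrite in_set0.
  by apply/negP => Hz; exact: excl_mm_1m he Hz Hy.
lia.
Qed.


Definition U (t b : K) : {set K} := [set x | (2 * (t * x ^+ 2) == b) && (sg x == t)].

Lemma S0_sub b : [set x | (x + 0) ^+ (m + 2) - (-1) * x ^+ (m + 2) == b] \subset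
  U 1 b :|: U (-1) b.
Proof.
apply/subsetP => x; rewrite !inE addr0 exprD sgE => /eqP Hx.
have E : 2 * (sg x * x ^+ 2) = b by rewrite -Hx; ring.
by case: (sg_cases x) => h; rewrite -E h !eqxx /= ?orbT.
Qed.

Lemma U_pair {t b x z} : t != 0 -> x \in U t b -> z \in U t b -> z = x \/ z = - x.
Proof.
move=> t0; rewrite !inE => /andP[/eqP Ex _] /andP[/eqP Ez _].
have : (z - x) * (z + x) * (2 * t) = 0.
  have -> : (z - x) * (z + x) * (2 * t) = 2 * (t * z ^+ 2) - 2 * (t * x ^+ 2) by ring.
  by rewrite Ex Ez subrr.
move/eqP; rewrite !mulf_eq0 (negbTE two_ne0) (negbTE t0) !orbF.
case/orP => /eqP h; [left|right].
  by apply/eqP; rewrite -subr_eq0 h.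
have -> : z = - x + (z + x) by ring.
by rewrite h addr0.
Qed.

Lemma U_le1 {t} b : eps = -1 -> (t = 1 \/ t = -1) -> leq #|U t b| 1.
Proof.
move=> he ht; have t0 : t != 0 by case: ht => ->; rewrite ?oner_eq0 ?m1_ne0.
apply: card_le1_of => x z Hx Hz.
case: (U_pair t0 Hx Hz) => // hz.
move: Hx Hz; rewrite !inE hz => /andP[_ /eqP s1] /andP[_ /eqP s2].
have ez : e (- x) = - e x by rewrite eN he mulN1r.
case: ht => ht; rewrite ht in s1 s2.
- have := sg1P s2; rewrite ez; case: (sg1P s1) => h1; rewrite h1.
  + by rewrite (e0P h1) oppr0.
  + by case=> /eqP; [rewrite (negbTE m1_ne0) | rewrite eq_sym (negbTE one_ne_m1)].
- have := sgm1P s2; rewrite ez (sgm1P s1) opprK => /eqP.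
  by rewrite (negbTE one_ne_m1).
Qed.

Lemma bound0 b : leq #|[set x | (x + 0) ^+ (m + 2) - (-1) * x ^+ (m + 2) == b]|
   (#|U 1 b| + #|U (-1) b|).
Proof.
apply: (leq_trans (subset_leq_card (S0_sub b))); exact: (leq_card_setU _ _).1.
Qed.

Lemma scale a b : a != 0 ->
  cDelta (fun x : K => x ^+ (m + 2)) (-1) a b = #|[set y | G y == b / (e a * a ^+ 2)]|.
Proof.
move=> a0; rewrite /cDelta -(card_preimset _ (mulfI a0)).
apply: eq_card => y; rewrite !inE.
have k0 : e a * a ^+ 2 != 0 by rewrite mulf_neq0 // expf_neq0.
have -> : (a * y + a) ^+ (m + 2) - (-1) * (a * y) ^+ (m + 2) = (e a * a ^+ 2) * G y.
  rewrite (_ : a * y + a = a * (y + 1)); last by ring.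
  rewrite /G !exprMn !exprD; ring.
apply/eqP/eqP => h.
  by rewrite -h mulrC mulKf.
by rewrite h mulrC divfK.
Qed.

Lemma bound_all_1 a b : eps = 1 -> leq (cDelta (fun x : K => x ^+ (m + 2)) (-1) a b) 4.
Proof.
move=> he; have [->|a0] := eqVneq a 0.
  apply: (leq_trans (bound0 b)).
  have h1 : leq #|U 1 b| 2 by apply: card_le2_of => y z; apply: U_pair; rewrite oner_eq0.
  have h2 : leq #|U (-1) b| 2 by apply: card_le2_of => y z; apply: U_pair; rewrite m1_ne0.
  lia.
by rewrite scale //; apply: bound_G_1.
Qed.

Lemma bound_all_m1 a b : eps = -1 -> leq (cDelta (fun x : K => x ^+ (m + 2)) (-1) a b) 3.
Proof.
move=> he; have [->|a0] := eqVneq a 0.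
  apply: (leq_trans (bound0 b)).
  have h1 : leq #|U 1 b| 1 := U_le1 b he (or_introl erefl).
  have h2 : leq #|U (-1) b| 1 := U_le1 b he (or_intror erefl).
  lia.
by rewrite scale //; apply: bound_G_m1.
Qed.

End Main.
Unset Implicit Arguments.

Theorem theorem7 (p n : nat) (K : finFieldType) :
  prime p -> (3 < p)%N -> (0 < n)%N -> #|K| = (p ^ n)%N ->
  let d := ((p ^ n + 3) %/ 2)%N in
  ((p ^ n %% 4 = 1)%N -> (cDU (fun x : K => x ^+ d) (-1 : K)%R <= 4)%N) /\
  ((p ^ n %% 4 = 3)%N -> (cDU (fun x : K => x ^+ d) (-1 : K)%R <= 3)%N).
Proof.
move=> hp hp3 hn hK d.
have hpn : (p <= p ^ n)%N by rewrite -{1}(expn1 p); apply: leq_pexp2l; lia.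
have podd : odd p by case: (even_prime hp) => // h; rewrite h in hp3.
have hp2 : p = (p %/ 2 * 2 + 1)%N by have := modn2 p; rewrite podd => h; lia.
have two_ne0 : (2 : K) != 0.
  apply/eqP => h2; have := pcharf0 (card_finPcharP hK hp).
  by rewrite hp2 natrD natrM h2 mulr0 add0r => /eqP; rewrite oner_eq0.
have key : forall (m : nat), (p ^ n = m * 2 + 1)%N -> d = (m + 2)%N /\
   (0 < m)%N /\ (forall x : K, x != 0 -> (x ^+ m) ^+ 2 = 1).
  move=> m hm; split; first by rewrite /d hm; lia.
  split; first by lia.
  move=> x x0; apply: (mulIf x0); rewrite mul1r -exprM -exprSr -(addn1 (m * 2)) -hm -hK.
  exact: expf_card.
have hf : forall (m : nat), d = (m + 2)%N ->
  cDU (fun x : K => x ^+ d) (-1) = cDU (fun x : K => x ^+ (m + 2)) (-1).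
  by move=> m ->.
split => hq.
- have [hd [m0 esq]] := key (p ^ n %/ 2)%N ltac:(lia).
  rewrite (hf _ hd); apply/bigmax_leqP => [[a b]] _ /=.
  apply: (bound_all_1 K _ two_ne0 m0 esq (erefl ((-1 : K) ^+ (p ^ n %/ 2)))).
  rewrite -signr_odd; have : ((p ^ n %/ 2) %% 2 = 0)%N by lia.
  by rewrite modn2; case: (odd _).
- have [hd [m0 esq]] := key (p ^ n %/ 2)%N ltac:(lia).
  rewrite (hf _ hd); apply/bigmax_leqP => [[a b]] _ /=.
  apply: (bound_all_m1 K _ two_ne0 m0 esq (erefl ((-1 : K) ^+ (p ^ n %/ 2)))).
  rewrite -signr_odd; have : ((p ^ n %/ 2) %% 2 = 1)%N by lia.
  by rewrite modn2; case: (odd _).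
Qed.
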